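(* Let $(X,\mu)$ be any measure space, let $N\geq 2$ be an integer, and let $f_1,\dots,f_N$ be non-negative measurable functions on $X$ with $0<\sum_{j=1}^N \|f_j\|_p^p<\infty$. Define $$\Gamma_p(f_1,\dots,f_N) := \frac{\left\Vert \binom{N}{2}^{-1}\sum_{1\le i< j\le N} f_if_j\right\Vert_{p/2}^{p/2}}{\frac1N \sum_{j=1}^N \|f_j\|_p^p}$$ and $$r(N,p) = \frac{2N}{2N+(p-2)(2N-1)}.$$ Then for all $p\in(2,\infty)$, $$\Big\|\sum_{j=1}^N f_j\Big\|_p^p \leq \Big[\,1 + (N-1)\,\Gamma_p(f_1,\dots,f_N)^{r(N,p)}\Big]^{p-1}\sum_{j=1}^N \|f_j\|_p^p,$$ and for all $p\in(1,2)$ the reverse inequality ($\geq$) holds.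
   Context: For any real $q\neq 0$ and measurable $f$, $\|f\|_q := \left(\int |f|^q\,d\mu\right)^{1/q}$ (this notation is used even when $q<1$, where it is not a norm). One has $0\le\Gamma_p\le 1$. *)

(* Defs.v *)
From HB Require Import structures.
From mathcomp Require Import all_boot all_order all_algebra.
From mathcomp Require Import all_classical all_reals all_analysis.
Set Implicit Arguments. Unset Strict Implicit. Unset Printing Implicit Defensive.
Import Order.TTheory GRing.Theory Num.Theory.
Local Open Scope classical_set_scope.
Local Open Scope ring_scope.

Definition pnormq {R : realType} {d : measure_display} {T : measurableType d}
  (mu : {measure set T -> \bar R}) (f : T -> R) (q : R) : \bar R :=
  (\int[mu]_x ((`|f x| `^ q)%:E))%E.

Definition sumpnorm {R : realType} {d : measure_display} {T : measurableType d}
  (mu : {measure set T -> \bar R}) (N : nat) (f : 'I_N -> T -> R) (p : R) : \bar R :=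
  (\sum_(j < N) pnormq mu (f j) p)%E.

Definition pairavg {R : realType} {T : Type} (N : nat) (f : 'I_N -> T -> R) : T -> R :=
  fun x => ('C(N, 2)%:R)^-1 * \sum_(i < N) \sum_(j < N | (i < j)%N) f i x * f j x.

(* Gamma_p(f_1..f_N); all quantities are finite under the hypotheses *)
Definition Gammap {R : realType} {d : measure_display} {T : measurableType d}
  (mu : {measure set T -> \bar R}) (N : nat) (f : 'I_N -> T -> R) (p : R) : R :=
  fine (pnormq mu (pairavg f) (p / 2)) / ((N%:R)^-1 * fine (sumpnorm mu f p)).

Definition rNp {R : realType} (N : nat) (p : R) : R :=
  (2 * N%:R) / (2 * N%:R + (p - 2) * (2 * N%:R - 1)).

(* Main.v *)
Require Import Defs.
From HB Require Import structures.
From mathcomp Require Import all_boot all_order all_algebra.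
From mathcomp Require Import all_classical all_reals all_analysis.
From mathcomp Require Import ring lra measurable_realfun.
Import Order.TTheory GRing.Theory Num.Theory.
Local Open Scope classical_set_scope.
Local Open Scope ring_scope.

Section S. Variable R : realType.
Lemma powR_lt_self (l q : R) : 1 < l -> q < 1 -> l `^ q < l.
Proof.
move=> l1 q1.
have l0 : 0 < l by lra.
rewrite /powR gt_eqF // -{2}(lnK l0) ltr_expR.
have := ln_gt0 l1. nra.
Qed.
Lemma powR_gt_self (l q : R) : 0 < l < 1 -> q < 1 -> l < l `^ q.
Proof.
move=> /andP[l0 l1] q1.
rewrite /powR gt_eqF // -{1}(lnK l0) ltr_expR.
have : ln l < 0 by rewrite ln_lt0 // l0 l1.
nra.
Qed.


Lemma amgm_w (N t r : R) : 1 < N -> 0 <= t ->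
  t `^ (r * (N - 1) / N) <= (1 + (N - 1) * t `^ r) / N.
Proof.
move=> N1 t0.
have N0 : 0 < N by lra.
have q0 : 0 < N / (N - 1) by apply: divr_gt0; lra.
have := @conjugate_powR R 1 (t `^ (r * (N - 1) / N)) N (N / (N - 1)) ler01 (powR_ge0 _ _) N0 q0.
rewrite mul1r powR1 -powRrM.
have -> : r * (N - 1) / N * (N / (N - 1)) = r by field; lra.
rewrite invf_div.
have -> : N^-1 + (N - 1) / N = 1 by field; lra.
move=> /(_ erefl) H; apply: (le_trans H).
have -> : (1 + (N - 1) * t `^ r) / N = 1 / N + t `^ r / (N / (N - 1)) by field; lra.
by rewrite invf_div.
Qed.



Lemma powR_anti (x y e : R) : 0 < x -> x <= y -> e <= 0 -> y `^ e <= x `^ e.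
Proof.
move=> x0 xy e0.
have y0 : 0 < y by lra.
rewrite /powR !gt_eqF // ler_expR.
have : ln x <= ln y by rewrite ler_ln ?posrE.
nra.
Qed.
Lemma powR_mono (x y e : R) : 0 <= x -> x <= y -> 0 <= e -> x `^ e <= y `^ e.
Proof.
move=> x0 xy e0; apply: ge0_ler_powR => //; rewrite nnegrE; lra.
Qed.



Definition rr (N p : R) := (2 * N) / (2 * N + (p - 2) * (2 * N - 1)).
Lemma rr_den (N p : R) : 1 < N -> 1 < p -> 0 < 2 * N + (p - 2) * (2 * N - 1).
Proof. move=> N1 p1; nra. Qed.
Lemma rr_gt0 (N p : R) : 1 < N -> 1 < p -> 0 < rr N p.
Proof. move=> N1 p1; rewrite /rr; apply: divr_gt0; [lra|exact: rr_den]. Qed.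

Lemma key_ineq (N p t : R) : 1 < N -> 1 < p -> 0 <= t ->
  let e := 1 - 2 / p in let w := 1 + (N - 1) * t `^ rr N p in
  (2 < p -> N `^ e * t `^ (2/p) <= w `^ e * t `^ rr N p) /\
  (p < 2 -> w `^ e * t `^ rr N p <= N `^ e * t `^ (2/p)).
Proof.
move=> N1 p1 t0 e w.
have D0 := @rr_den N p N1 p1.
have r0 := @rr_gt0 N p N1 p1.
have p0 : p != 0 by apply/eqP; lra.
have [->|tpos] := eqVneq t 0.
  rewrite !powR0 ?mulr0; first by split.
    by rewrite gt_eqF.
  by rewrite mulf_neq0 // invr_neq0 // pnatr_eq0.
have tp : 0 < t by rewrite lt_neqAle eq_sym tpos.
set r := rr N p.
have ex : r * (N - 1) / N * e = 2 / p - r.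
  rewrite /r /rr /e; field; apply/andP; split; [|apply/andP; split]; apply/eqP; lra.
have t2 : t `^ (2/p) = t `^ (r * (N - 1) / N) `^ e * t `^ r.
  by rewrite -powRrM ex -powRD ?subrK // tpos implybT.
have am := @amgm_w N t r N1 t0.
have N0 : 0 < N by lra.
have xN : N * t `^ (r * (N - 1) / N) <= w.
  by rewrite /w; move: am; rewrite ler_pdivlMr // mulrC.
have x0 : 0 < t `^ (r * (N - 1) / N) by apply: powR_gt0.
rewrite t2 mulrA -powRM ?powR_ge0 //; last exact: ltW.
split => hp.
  apply: ler_wpM2r; first exact: powR_ge0.
  apply: powR_mono => //; first by apply: mulr_ge0; [lra|exact: powR_ge0].
  rewrite /e subr_ge0 ler_pdivrMr; lra.
apply: ler_wpM2r; first exact: powR_ge0.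
apply: powR_anti => //; first exact: mulr_gt0.
rewrite /e subr_le0 ler_pdivlMr; lra.
Qed.

Lemma powRDp (x r s : R) : 0 < x -> x `^ (r + s) = x `^ r * x `^ s.
Proof. by move=> x0; rewrite powRD // lt0r_neq0 // implybT. Qed.

Lemma s0_parts (N p a b : R) : 1 < N -> 1 < p -> 0 < a -> 0 <= b ->
  let t := N * b / a in let w := 1 + (N - 1) * t `^ rr N p in
  let th := (p - 2) / (p - 1) in let e := 1 - 2 / p in
  let s0 := w `^ (p - 1) * a in
  [/\ s0 `^ th * a `^ (1 - th) = a * w `^ (p - 2),
      N * (N - 1) * (s0 `^ e * b `^ (2 / p)) =
        (N - 1) * a * w `^ ((p - 1) * e) * (N `^ e * t `^ (2/p)) &
      s0 = a * w `^ (p - 2) + (N - 1) * a * w `^ ((p - 1) * e) * (w `^ e * t `^ rr N p)].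
Proof.
move=> N1 p1 a0 b0 t w th e s0.
have N0 : 0 < N by lra.
have t0 : 0 <= t by rewrite /t; apply: divr_ge0; [apply: mulr_ge0|]; lra.
have w1 : 1 <= w by rewrite /w lerDl; apply: mulr_ge0; [lra|exact: powR_ge0].
have w0 : 0 < w by lra.
have p0 : p != 0 by apply/eqP; lra.
have pm1 : p - 1 != 0 by apply/eqP; lra.
split.
- rewrite /s0 powRM ?powR_ge0 //; last exact: ltW.
  rewrite -powRrM -mulrA -powRDp // subrKC powRr1; last exact: ltW.
  by rewrite mulrC; congr (_ * w `^ _); rewrite /th; field.
- have NN : N = N `^ e * N `^ (2 / p) by rewrite -powRDp // /e subrK powRr1 //; lra.
  rewrite {1}NN /s0 powRM ?powR_ge0 //; last exact: ltW.
  rewrite -powRrM.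
  have Nb : N `^ (2/p) * b `^ (2/p) = t `^ (2/p) * a `^ (2/p).
    rewrite -!powRM //; [|lra|exact: ltW].
    congr (_ `^ _); rewrite /t; field; apply/eqP; lra.
  have ae : a `^ e * a `^ (2/p) = a by rewrite -powRDp // /e subrK powRr1 //; exact: ltW.
  transitivity ((N - 1) * w `^ ((p - 1) * e) * N `^ e * (a `^ e * (N `^ (2/p) * b `^ (2/p)))).
    by rewrite mulrC; ring.
  rewrite Nb -[in RHS]ae; ring.
- have ew : w `^ (p - 2) = w `^ ((p - 1) * e) * w `^ e.
    by rewrite -powRDp //; congr (w `^ _); rewrite /e; field.
  have wm : w `^ (p - 1) = w `^ (p - 2) * w.
    by rewrite -{3}(powRr1 (ltW w0)) -powRDp //; congr (w `^ _); ring.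
  rewrite /s0 wm ew.
  have -> : w = 1 + (N - 1) * t `^ rr N p by [].
  set X := w `^ _; set Y := w `^ e; ring.
Qed.
Lemma SL_gt (N p a b s : R) : 1 < N -> 2 < p -> 0 < a -> 0 <= b -> 0 <= s ->
  s <= s `^ ((p - 2) / (p - 1)) * a `^ (1 - (p - 2) / (p - 1)) +
       N * (N - 1) * (s `^ (1 - 2 / p) * b `^ (2 / p)) ->
  s <= (1 + (N - 1) * (N * b / a) `^ rr N p) `^ (p - 1) * a.
Proof.
move=> N1 p2 a0 b0 s0' H.
have p1 : 1 < p by lra.
have [E1 E2 E3] := @s0_parts N p a b N1 p1 a0 b0.
set t := N * b / a in E1 E2 E3 *.
set w := 1 + (N - 1) * t `^ rr N p in E1 E2 E3 *.
set th := (p - 2) / (p - 1) in E1 E2 E3 H *.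
set e := 1 - 2 / p in E1 E2 E3 H *.
set s0 := w `^ (p - 1) * a in E1 E2 E3 *.
have N0 : 0 < N by lra.
have t0 : 0 <= t by rewrite /t; apply: divr_ge0; [apply: mulr_ge0|]; lra.
have w1 : 1 <= w by rewrite /w lerDl; apply: mulr_ge0; [lra|exact: powR_ge0].
have w0 : 0 < w by lra.
have s0p : 0 < s0 by apply: mulr_gt0 => //; exact: powR_gt0.
have [//|lt] := leP s s0.
have [K _] := @key_ineq N p t N1 p1 t0.
have K' := K p2.
have T12 : s0 `^ th * a `^ (1 - th) + N * (N - 1) * (s0 `^ e * b `^ (2 / p)) <= s0.
  rewrite E1 E2 E3 lerD2l; apply: ler_wpM2l => //.
  apply: mulr_ge0; [apply: mulr_ge0; [lra|exact: ltW]|exact: powR_ge0].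
pose l := s / s0.
have l1 : 1 < l by rewrite /l ltr_pdivlMr // mul1r.
have sl : s = l * s0 by rewrite /l divfK // gt_eqF.
have th1 : th < 1 by rewrite /th ltr_pdivrMr; lra.
have p2p : 0 < 2 / p by apply: divr_gt0; lra.
have e1 : e < 1 by rewrite /e; lra.
have T1p : 0 < s0 `^ th * a `^ (1 - th) by apply: mulr_gt0; exact: powR_gt0.
have l0 : 0 < l by lra.
have P1 : (l * s0) `^ th * a `^ (1 - th) = l `^ th * (s0 `^ th * a `^ (1 - th)).
  by rewrite powRM ?mulrA //; [exact: ltW|exact: ltW].
have P2 : (l * s0) `^ e * b `^ (2/p) = l `^ e * (s0 `^ e * b `^ (2/p)).
  by rewrite powRM ?mulrA //; [exact: ltW|exact: ltW].
move: H T12 T1p; rewrite sl P1 P2.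
have h1 := @powR_lt_self l th l1 th1.
have h2 := @powR_lt_self l e l1 e1.
have T2p : 0 <= s0 `^ e * b `^ (2 / p) by apply: mulr_ge0; exact: powR_ge0.
have cp : 0 <= N * (N - 1) by apply: mulr_ge0; lra.
clearbody l s0.
move: h1 h2 T2p cp.
set T1 := s0 `^ th * a `^ (1 - th); set T2 := s0 `^ e * b `^ (2 / p).
set L1 := l `^ th; set L2 := l `^ e; set c := N * (N - 1).
move=> h1 h2 T2p cp H T12 T1p.
have h3 : L1 * T1 < l * T1 by rewrite ltr_pM2r.
have h4 : c * (L2 * T2) <= c * (l * T2) by apply: ler_wpM2l => //; apply: ler_wpM2r => //; exact: ltW.
have h5 : l * (T1 + c * T2) <= l * s0 by apply: ler_wpM2l => //; exact: ltW.
move: h5; rewrite mulrDr [l * (c * T2)]mulrCA => h5.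
lra.
Qed.

Lemma SL_lt (N p a b s : R) : 1 < N -> 1 < p -> p < 2 -> 0 < a -> 0 <= b -> 0 < s ->
  s `^ ((p - 2) / (p - 1)) * a `^ (1 - (p - 2) / (p - 1)) +
       N * (N - 1) * (s `^ (1 - 2 / p) * b `^ (2 / p)) <= s ->
  (1 + (N - 1) * (N * b / a) `^ rr N p) `^ (p - 1) * a <= s.
Proof.
move=> N1 p1 p2 a0 b0 s0' H.
have [E1 E2 E3] := @s0_parts N p a b N1 p1 a0 b0.
set t := N * b / a in E1 E2 E3 *.
set w := 1 + (N - 1) * t `^ rr N p in E1 E2 E3 *.
set th := (p - 2) / (p - 1) in E1 E2 E3 H *.
set e := 1 - 2 / p in E1 E2 E3 H *.
set s0 := w `^ (p - 1) * a in E1 E2 E3 *.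
have N0 : 0 < N by lra.
have t0 : 0 <= t by rewrite /t; apply: divr_ge0; [apply: mulr_ge0|]; lra.
have w1 : 1 <= w by rewrite /w lerDl; apply: mulr_ge0; [lra|exact: powR_ge0].
have w0 : 0 < w by lra.
have s0p : 0 < s0 by apply: mulr_gt0 => //; exact: powR_gt0.
have [//|lt] := leP s0 s.
have [_ K] := @key_ineq N p t N1 p1 t0.
have K' := K p2.
have T12 : s0 <= s0 `^ th * a `^ (1 - th) + N * (N - 1) * (s0 `^ e * b `^ (2 / p)).
  rewrite E1 E2 E3 lerD2l; apply: ler_wpM2l => //.
  apply: mulr_ge0; [apply: mulr_ge0; [lra|exact: ltW]|exact: powR_ge0].
pose l := s / s0.
have l1 : 0 < l < 1 by rewrite /l divr_gt0 //= ltr_pdivrMr // mul1r.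
have sl : s = l * s0 by rewrite /l divfK // gt_eqF.
have th1 : th < 1 by rewrite /th ltr_pdivrMr; lra.
have p2p : 0 < 2 / p by apply: divr_gt0; lra.
have e1 : e < 1 by rewrite /e; lra.
have T1p : 0 < s0 `^ th * a `^ (1 - th) by apply: mulr_gt0; exact: powR_gt0.
have l0 : 0 < l by case/andP: l1.
have P1 : (l * s0) `^ th * a `^ (1 - th) = l `^ th * (s0 `^ th * a `^ (1 - th)).
  by rewrite powRM ?mulrA //; [exact: ltW|exact: ltW].
have P2 : (l * s0) `^ e * b `^ (2/p) = l `^ e * (s0 `^ e * b `^ (2/p)).
  by rewrite powRM ?mulrA //; [exact: ltW|exact: ltW].
move: H T12 T1p; rewrite sl P1 P2.
have h1 := @powR_gt_self l th l1 th1.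
have h2 := @powR_gt_self l e l1 e1.
have T2p : 0 <= s0 `^ e * b `^ (2 / p) by apply: mulr_ge0; exact: powR_ge0.
have cp : 0 <= N * (N - 1) by apply: mulr_ge0; lra.
clearbody l s0.
move: h1 h2 T2p cp.
set T1 := s0 `^ th * a `^ (1 - th); set T2 := s0 `^ e * b `^ (2 / p).
set L1 := l `^ th; set L2 := l `^ e; set c := N * (N - 1).
move=> h1 h2 T2p cp H T12 T1p.
have h3 : l * T1 < L1 * T1 by rewrite ltr_pM2r.
have h4 : c * (l * T2) <= c * (L2 * T2) by apply: ler_wpM2l => //; apply: ler_wpM2r => //; exact: ltW.
have h5 : l * s0 <= l * (T1 + c * T2) by apply: ler_wpM2l => //; exact: ltW.
move: h5; rewrite mulrDr [l * (c * T2)]mulrCA => h5.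
lra.
Qed.
Lemma young_w (u v al : R) : 0 <= u -> 0 <= v -> 0 < al < 1 ->
  u `^ al * v `^ (1 - al) <= al * u + (1 - al) * v.
Proof.
move=> u0 v0 /andP[a0 a1].
have b0 : 0 < 1 - al by lra.
have := @conjugate_powR R (u `^ al) (v `^ (1 - al)) al^-1 (1 - al)^-1 (powR_ge0 _ _)
  (powR_ge0 _ _).
rewrite !invr_gt0 => /(_ a0 b0).
rewrite !invrK -!powRrM !mulfV ?gt_eqF // !powRr1 //.
have -> : al + (1 - al) = 1 by ring.
by move=> /(_ erefl); rewrite [u * _]mulrC [v * _]mulrC.
Qed.

Lemma fin_hoelder (n : nat) (x y : 'I_n -> R) (al : R) : 0 < al < 1 ->
  (forall j, 0 <= x j) -> (forall j, 0 <= y j) ->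
  \sum_(j < n) x j `^ al * y j `^ (1 - al) <=
  (\sum_(j < n) x j) `^ al * (\sum_(j < n) y j) `^ (1 - al).
Proof.
move=> /andP[a0 a1] x0 y0.
set X := \sum_(j < n) x j; set Y := \sum_(j < n) y j.
have X0 : 0 <= X by apply: sumr_ge0.
have Y0 : 0 <= Y by apply: sumr_ge0.
have b0 : 1 - al != 0 by apply/eqP; lra.
have [XE|Xn] := eqVneq X 0.
  have xe : forall j, x j = 0.
    by move=> j; move/eqP: XE; rewrite psumr_eq0 // => /allP/(_ j (mem_index_enum _)) /implyP/(_ isT) /eqP.
  rewrite big1; first by apply: mulr_ge0; exact: powR_ge0.
  by move=> j _; rewrite xe powR0 ?mul0r // gt_eqF.
have [YE|Yn] := eqVneq Y 0.
  have ye : forall j, y j = 0.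
    by move=> j; move/eqP: YE; rewrite psumr_eq0 // => /allP/(_ j (mem_index_enum _)) /implyP/(_ isT) /eqP.
  rewrite big1; first by apply: mulr_ge0; exact: powR_ge0.
  by move=> j _; rewrite ye powR0 ?mulr0.
have Xp : 0 < X by rewrite lt_neqAle eq_sym Xn.
have Yp : 0 < Y by rewrite lt_neqAle eq_sym Yn.
set K := X `^ al * Y `^ (1 - al).
apply: (@le_trans _ _ (\sum_(j < n) K * (al * (x j / X) + (1 - al) * (y j / Y)))).
  apply: ler_sum => j _.
  have -> : x j `^ al * y j `^ (1 - al) = K * ((x j / X) `^ al * (y j / Y) `^ (1 - al)).
    rewrite /K !powRM ?invr_ge0 ?(ltW Xp) ?(ltW Yp) //.
    have e1 : X `^ al * X^-1 `^ al = 1 by rewrite -powRM ?mulfV ?powR1 ?gt_eqF ?invr_ge0 ?(ltW Xp).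
    have e2 : Y `^ (1 - al) * Y^-1 `^ (1 - al) = 1 by rewrite -powRM ?mulfV ?powR1 ?gt_eqF ?invr_ge0 ?(ltW Yp).
    transitivity (x j `^ al * y j `^ (1 - al) * ((X `^ al * X^-1 `^ al) * (Y `^ (1 - al) * Y^-1 `^ (1 - al)))); last by ring.
    by rewrite e1 e2 !mulr1.
  apply: ler_wpM2l; first by apply: mulr_ge0; exact: powR_ge0.
  apply: young_w; [apply: divr_ge0 => //|apply: divr_ge0 => //|by rewrite a0 a1].
rewrite -mulr_sumr big_split /= -!mulr_sumr -!mulr_suml -/X -/Y !mulfV ?gt_eqF //.
by rewrite !mulr1 subrKC mulr1.
Qed.
Lemma mpow (d : measure_display) (T : measurableType d) (u : T -> R) (q : R) :
  measurable_fun setT u -> measurable_fun setT (fun x => u x `^ q).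
Proof. by move=> mu; apply: (@measurableT_comp _ _ _ _ _ _ (@powR R ^~ q)) => //; exact: measurable_powR. Qed.

Lemma Lnorm_pow (d : measure_display) (T : measurableType d) (mu : {measure set T -> \bar R})
  (u : T -> R) (al : R) : 0 < al -> (forall x, 0 <= u x) ->
  Lnorm mu (al^-1)%:E (EFin \o (fun x => u x `^ al)) = ((\int[mu]_x (u x)%:E) `^ al)%E.
Proof.
move=> a0 u0; rewrite unlock /= invrK; congr (_ `^ _)%E.
apply: eq_integral => x _ /=.
by rewrite ger0_norm ?powR_ge0 // -powRrM mulfV ?gt_eqF // powRr1.
Qed.

Lemma int_hoelder (d : measure_display) (T : measurableType d) (mu : {measure set T -> \bar R})
  (u v : T -> R) (al : R) : 0 < al < 1 ->
  measurable_fun setT u -> measurable_fun setT v ->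
  (forall x, 0 <= u x) -> (forall x, 0 <= v x) ->
  (\int[mu]_x ((u x `^ al * v x `^ (1 - al))%:E) <=
   (\int[mu]_x (u x)%:E) `^ al * (\int[mu]_x (v x)%:E) `^ (1 - al))%E.
Proof.
move=> /andP[a0 a1] mu_ mv u0 v0.
have b0 : 0 < 1 - al by lra.
have := @hoelder d T R mu (fun x => u x `^ al) (fun x => v x `^ (1 - al)) al^-1 (1 - al)^-1
  (@mpow d T u al mu_) (@mpow d T v (1 - al) mv).
rewrite !invr_gt0 => /(_ a0 b0); rewrite !invrK.
have -> : al + (1 - al) = 1 by ring.
move=> /(_ erefl).
rewrite Lnorm1 (@Lnorm_pow d T mu u al a0 u0) (@Lnorm_pow d T mu v (1 - al) b0 v0).
congr (_ <= _)%E; apply: eq_integral => x _ /=.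
by rewrite ger0_norm // mulr_ge0 // powR_ge0.
Qed.
Lemma bin2_mul2 (n : nat) : ('C(n, 2) * 2 = n * n.-1)%N.
Proof.
rewrite bin2 muln2 halfK oddM; case: n => [//|m] /=.
by case: (odd m); rewrite /= subn0.
Qed.

Lemma bin2R (n : nat) : ('C(n, 2))%:R * 2 = n%:R * (n%:R - 1) :> R.
Proof.
have H := congr1 (fun k : nat => k%:R : R) (bin2_mul2 n).
rewrite /= !natrM in H; rewrite H; clear H.
case: n => [|m]; first by rewrite !(mulr0n, mul0r).
by rewrite /= -natr1 addrK.
Qed.

Lemma sq_decomp (n : nat) (a : 'I_n -> R) :
  (\sum_(j < n) a j) ^+ 2 = \sum_(j < n) a j ^+ 2 +
    2 * \sum_(i < n) \sum_(j < n | (i < j)%N) a i * a j.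
Proof.
rewrite expr2 big_distrl /=.
under eq_bigr => i _ do rewrite big_distrr /=.
have E : forall i : 'I_n, \sum_(j < n) a i * a j =
   a i ^+ 2 + (\sum_(j < n | (i < j)%N) a i * a j + \sum_(j < n | (j < i)%N) a i * a j).
  move=> i; rewrite (bigD1 i) //= -expr2; congr (_ + _).
  rewrite (bigID (fun j : 'I_n => (i < j)%N)) /=; congr (_ + _).
    apply: eq_bigl => j; rewrite -(inj_eq val_inj) /=.
    by case: (ltngtP i j) => h; rewrite ?andbT ?andbF // ?(gtn_eqF h) // h eqxx.
  apply: eq_bigl => j; rewrite -(inj_eq val_inj) /=.
  by case: (ltngtP i j) => h; rewrite ?andbT ?andbF // ?(ltn_eqF h) // h eqxx.
under eq_bigr => i _ do rewrite E.
rewrite big_split /= big_split /=; congr (_ + _).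
rewrite mulr2n mulrDl mul1r; congr (_ + _).
rewrite (exchange_big_dep xpredT) //=.
by apply: eq_bigr => i _; apply: eq_bigr => j _; rewrite mulrC.
Qed.
Lemma pow_sum_bound (n : nat) (a : 'I_n -> R) (p : R) : 1 < p -> (forall j, 0 <= a j) ->
  (\sum_(j < n) a j) `^ p <= n%:R `^ (p - 1) * \sum_(j < n) a j `^ p.
Proof.
move=> p1 a0.
have p0 : p != 0 by apply/eqP; lra.
have ip : 0 < p^-1 < 1 by rewrite invr_gt0 invf_lt1; lra.
have := @fin_hoelder n (fun j => a j `^ p) (fun=> 1) p^-1 ip (fun j => powR_ge0 _ _) (fun=> ler01).
rewrite /= powR1 sumr_const card_ord.
under eq_bigr => j _ do rewrite -powRrM mulfV // powRr1 // mulr1.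
move=> H.
have S0 : 0 <= \sum_(j < n) a j by apply: sumr_ge0.
apply: (le_trans (@powR_mono _ _ p S0 H (ltW (lt_trans ltr01 p1)))).
have Ap : 0 <= \sum_(j < n) a j `^ p by apply: sumr_ge0 => j _; exact: powR_ge0.
rewrite powRM ?powR_ge0 // -!powRrM mulVf // powRr1 //.
have -> : (1 - p^-1) * p = p - 1 by field.
by rewrite mulrC.
Qed.

Lemma sq_pow (x : R) : 0 <= x -> x `^ 2 = x ^+ 2.
Proof. by move=> x0; rewrite -[2]/(2%:R) powR_mulrn. Qed.

Lemma bound_gt2 (n : nat) (a : 'I_n -> R) (p th : R) : 2 < p -> (forall j, 0 <= a j) ->
  th = (p - 2) / (p - 1) ->
  (\sum_(j < n) a j) `^ (p - 2) * \sum_(j < n) a j ^+ 2 <=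
  ((\sum_(j < n) a j) `^ p) `^ th * (\sum_(j < n) a j `^ p) `^ (1 - th).
Proof.
move=> p2 a0 thE.
have pm1 : p - 1 != 0 by apply/eqP; lra.
have ip : 0 < th < 1 by rewrite thE divr_gt0 ?ltr_pdivrMr /=; lra.
have := @fin_hoelder n a (fun j => a j `^ p) th ip a0 (fun j => powR_ge0 _ _).
have E : th + p * (1 - th) = 2 by rewrite thE; field.
have T : forall j, a j `^ th * (a j `^ p) `^ (1 - th) = a j ^+ 2.
  move=> j; rewrite -powRrM -powRD; last by rewrite E; apply/implyP => /eqP h; exfalso; lra.
  by rewrite E sq_pow.
under eq_bigr => j _ do rewrite T.
move=> H.
have S0 : 0 <= \sum_(j < n) a j by apply: sumr_ge0.
apply: (le_trans (ler_wpM2l (powR_ge0 _ _) H)).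
rewrite mulrA -powRD; last by apply/implyP => /eqP; rewrite thE => h; exfalso; move: h; apply/eqP; lra.
have -> : p - 2 + th = p * th by rewrite thE; field.
by rewrite powRrM.
Qed.
Lemma bound_lt2 (n : nat) (a : 'I_n -> R) (p : R) : 1 < p -> p < 2 -> (forall j, 0 <= a j) ->
  \sum_(j < n) a j `^ p <=
  ((\sum_(j < n) a j) `^ p) `^ (2 - p) * ((\sum_(j < n) a j) `^ (p - 2) * \sum_(j < n) a j ^+ 2) `^ (p - 1).
Proof.
move=> p1 p2 a0.
have ip : 0 < 2 - p < 1 by apply/andP; split; lra.
have := @fin_hoelder n a (fun j => a j ^+ 2) (2 - p) ip a0 (fun j => sqr_ge0 _).
have E1 : 1 - (2 - p) = p - 1 by ring.
rewrite E1.
have T : forall j, a j `^ (2 - p) * (a j ^+ 2) `^ (p - 1) = a j `^ p.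
  move=> j; rewrite -sq_pow ?(a0 j) // -powRrM -powRD; last by apply/implyP => /eqP h; exfalso; lra.
  by congr (_ `^ _); ring.
under eq_bigr => j _ do rewrite T.
move=> H; apply: (le_trans H).
have S0 : 0 <= \sum_(j < n) a j by apply: sumr_ge0.
have Q0 : 0 <= \sum_(j < n) a j ^+ 2 by apply: sumr_ge0 => j _; exact: sqr_ge0.
rewrite (powRM _ (powR_ge0 _ _) Q0) mulrA -!powRrM -powRD; last by apply/implyP => /eqP h; exfalso; lra.
by have -> : p * (2 - p) + (p - 2) * (p - 1) = 2 - p by ring.
Qed.

Lemma Bid (S P p : R) : 0 <= S -> 0 <= P -> (S = 0 -> P = 0) -> 0 < p ->
  P `^ (p / 2) = (S `^ p) `^ (1 - p / 2) * (S `^ (p - 2) * P) `^ (p / 2).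
Proof.
move=> S0 P0 SP p0.
have [E|Sn] := eqVneq S 0.
  rewrite (SP E) powR0 ?mulr0 ?powR0 ?mulr0 //; apply/eqP; lra.
have Sp : 0 < S by rewrite lt_neqAle eq_sym Sn.
rewrite powRM ?powR_ge0 // mulrA -!powRrM -powRD; last by rewrite Sn implybT.
have -> : p * (1 - p / 2) + (p - 2) * (p / 2) = 0 by field.
by rewrite powRr0 mul1r.
Qed.

Lemma Gid (S P p : R) : 0 <= P -> 0 < p ->
  S `^ (p - 2) * P = (S `^ p) `^ (1 - 2 / p) * (P `^ (p / 2)) `^ (2 / p).
Proof.
move=> P0 p0; rewrite -!powRrM.
have -> : p * (1 - 2 / p) = p - 2 by field; apply/eqP; lra.
have -> : p / 2 * (2 / p) = 1 by field; apply/eqP; lra.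
by rewrite powRr1.
Qed.

Lemma Sdecomp (S Q p : R) : 0 <= S -> p != 2 -> 0 < p ->
  S `^ p = S `^ (p - 2) * S ^+ 2.
Proof.
move=> S0 p2 p0.
have [->|Sn] := eqVneq S 0.
  rewrite !powR0 ?mul0r //; [by rewrite subr_eq0|exact: lt0r_neq0].
have Sp : 0 < S by rewrite lt_neqAle eq_sym Sn.
by rewrite -sq_pow // -powRD ?Sn ?implybT // subrK.
Qed.

Lemma Pbound (S P p : R) : 0 <= P -> 0 <= S -> P <= S ^+ 2 -> 0 < p ->
  P `^ (p / 2) <= S `^ p.
Proof.
move=> P0 S0 PS p0.
rewrite -sq_pow // in PS.
apply: (le_trans (@powR_mono _ _ (p / 2) P0 PS _)); first by apply: divr_ge0; lra.
by rewrite -powRrM mulrC divfK.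
Qed.
Lemma inv_step (s a z al be : R) : 0 < s -> 0 <= a -> 0 <= z -> 0 < be ->
  a <= s `^ al * z `^ be -> s `^ (- al / be) * a `^ (be^-1) <= z.
Proof.
move=> s0 a0 z0 b0 H.
have bi : 0 <= be^-1 by rewrite invr_ge0; exact: ltW.
have := @powR_mono _ _ be^-1 a0 H bi.
rewrite powRM ?powR_ge0 // -!powRrM mulfV ?gt_eqF // powRr1 // => H2.
have sp : 0 < s `^ (- al / be) by exact: powR_gt0.
apply: (le_trans (ler_wpM2l (ltW sp) H2)).
rewrite mulrA -powRD ?lt0r_neq0 ?implybT //.
have -> : - al / be + al * be^-1 = 0 by rewrite mulNr addNr.
by rewrite powRr0 mul1r.
Qed.
Lemma Ile (d : measure_display) (T : measurableType d) (mu : {measure set T -> \bar R})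
  (g h : T -> R) : measurable_fun setT g -> measurable_fun setT h ->
  (forall x, 0 <= g x) -> (forall x, g x <= h x) ->
  (\int[mu]_x (g x)%:E <= \int[mu]_x (h x)%:E)%E.
Proof.
move=> mg mh g0 gh; apply: ge0_le_integral => //.
- by move=> x _; rewrite lee_fin.
- exact/measurable_EFinP.
- exact/measurable_EFinP.
- by move=> x _; rewrite lee_fin.
Qed.

Lemma Ige0 (d : measure_display) (T : measurableType d) (mu : {measure set T -> \bar R})
  (g : T -> R) : (forall x, 0 <= g x) -> (0 <= \int[mu]_x (g x)%:E)%E.
Proof. by move=> g0; apply: integral_ge0 => x _; rewrite lee_fin. Qed.

Lemma IaddZ (d : measure_display) (T : measurableType d) (mu : {measure set T -> \bar R})
  (g h : T -> R) (k : R) : measurable_fun setT g -> measurable_fun setT h ->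
  (forall x, 0 <= g x) -> (forall x, 0 <= h x) -> 0 <= k ->
  (\int[mu]_x (g x + k * h x)%:E = \int[mu]_x (g x)%:E + k%:E * \int[mu]_x (h x)%:E)%E.
Proof.
move=> mg mh g0 h0 k0.
under eq_integral do rewrite EFinD EFinM.
rewrite ge0_integralD //.
- by rewrite ge0_integralZl_EFin //; [move=> x _; rewrite lee_fin|exact/measurable_EFinP].
- by move=> x _; rewrite lee_fin.
- exact/measurable_EFinP.
- by move=> x _; rewrite lee_fin mulr_ge0.
- by apply/measurable_EFinP; apply: measurable_funM.
Qed.

Lemma IZ (d : measure_display) (T : measurableType d) (mu : {measure set T -> \bar R})
  (g : T -> R) (k : R) : measurable_fun setT g -> (forall x, 0 <= g x) -> 0 <= k ->
  (\int[mu]_x (k * g x)%:E = k%:E * \int[mu]_x (g x)%:E)%E.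
Proof.
move=> mg g0 k0; under eq_integral do rewrite EFinM.
by rewrite ge0_integralZl_EFin //; [move=> x _; rewrite lee_fin|exact/measurable_EFinP].
Qed.

Lemma msum_cond (d : measure_display) (T : measurableType d) (n : nat) (P : pred 'I_n)
  (g : 'I_n -> T -> R) : (forall j, measurable_fun setT (g j)) ->
  measurable_fun setT (fun x => \sum_(j < n | P j) g j x).
Proof.
move=> mg.
rewrite (_ : (fun x => _) = (fun x => \sum_(j < n) (if P j then g j x else 0))); last first.
  by apply/funext => x; rewrite big_mkcond.
apply: measurable_sum => j; case: (P j) => //; exact: measurable_cst.
Qed.
End S.

Lemma core (R : realType) (d : measure_display) (T : measurableType d)
  (mu : {measure set T -> \bar R}) (S Q P A B : T -> R) (NR c p : R) :
  1 < p -> p != 2 -> 2 <= NR -> c = NR * (NR - 1) ->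
  measurable_fun setT S -> measurable_fun setT Q -> measurable_fun setT P ->
  measurable_fun setT A -> measurable_fun setT B ->
  (forall x, 0 <= S x) -> (forall x, 0 <= Q x) -> (forall x, 0 <= P x) ->
  (forall x, 0 <= A x) -> (forall x, 0 <= B x) ->
  (forall x, S x `^ p = S x `^ (p - 2) * Q x + c * (S x `^ (p - 2) * P x)) ->
  (forall x, 2 < p -> S x `^ (p - 2) * Q x <= (S x `^ p) `^ ((p - 2) / (p - 1)) * A x `^ (1 - (p - 2) / (p - 1))) ->
  (forall x, p < 2 -> A x <= (S x `^ p) `^ (2 - p) * (S x `^ (p - 2) * Q x) `^ (p - 1)) ->
  (forall x, S x `^ (p - 2) * P x = (S x `^ p) `^ (1 - 2 / p) * B x `^ (2 / p)) ->
  (forall x, B x = (S x `^ p) `^ (1 - p / 2) * (S x `^ (p - 2) * P x) `^ (p / 2)) ->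
  (forall x, S x `^ p <= NR `^ (p - 1) * A x) ->
  (forall x, B x <= S x `^ p) ->
  (0 < \int[mu]_x (A x)%:E)%E -> (\int[mu]_x (A x)%:E < +oo)%E ->
  let a := fine (\int[mu]_x (A x)%:E)%E in let b := fine (\int[mu]_x (B x)%:E)%E in
  let w := (1 + (NR - 1) * (NR * b / a) `^ rr _ NR p) `^ (p - 1) in
  (2 < p -> (\int[mu]_x (S x `^ p)%:E <= w%:E * \int[mu]_x (A x)%:E)%E) /\
  (p < 2 -> (w%:E * \int[mu]_x (A x)%:E <= \int[mu]_x (S x `^ p)%:E)%E).
Proof.
move=> hp1 hp2 NR2 cE.
have p0 : 0 < p by lra.
have c0 : 0 <= c by rewrite cE; nra.
have c1 : 1 <= c by rewrite cE; nra.
have NR1 : 1 < NR by lra.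
have pm1 : 0 < p - 1 by lra.
have p2p : 0 < p / 2 by lra.
have G1 : 2 < p -> 0 < (p - 2) / (p - 1) < 1.
  by move=> hp; apply/andP; split; [apply: divr_gt0; lra| rewrite ltr_pdivrMr; lra].
have G2 : 2 < p -> 0 < 1 - 2 / p < 1.
  move=> hp; have : 0 < 2 / p by apply: divr_gt0; lra.
  by move=> h; apply/andP; split; [rewrite subr_gt0 ltr_pdivrMr; lra|lra].
have L1 : p < 2 -> 0 < 2 - p < 1 by move=> hp; apply/andP; split; lra.
have L2 : p < 2 -> 0 < 1 - p / 2 < 1 by move=> hp; apply/andP; split; lra.
have L3 : p < 2 -> 2 - p != 0 by move=> hp; apply/eqP; lra.
have E1 : - (2 - p) / (p - 1) = (p - 2) / (p - 1) by rewrite opprB.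
have E2 : (p - 1)^-1 = 1 - (p - 2) / (p - 1) by field; apply/eqP; lra.
have E3 : - (1 - p / 2) / (p / 2) = 1 - 2 / p by field; apply/eqP; lra.
have E4 : (p / 2)^-1 = 2 / p by rewrite invf_div.
move=> mS mQ mP mA mB S0 Q0 P0 A0 B0 Sdec Fgt Flt Gx Bx SA BS hApos hAfin a b w.
have mSp q : measurable_fun setT (fun x => S x `^ q) by exact: mpow.
set IS := (\int[mu]_x (S x `^ p)%:E)%E.
set IA := (\int[mu]_x (A x)%:E)%E.
set IB := (\int[mu]_x (B x)%:E)%E.
set X := (\int[mu]_x (S x `^ (p - 2) * Q x)%:E)%E.
set Y := (\int[mu]_x (S x `^ (p - 2) * P x)%:E)%E.
have mX : measurable_fun setT (fun x => S x `^ (p - 2) * Q x) by apply: measurable_funM.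
have mY : measurable_fun setT (fun x => S x `^ (p - 2) * P x) by apply: measurable_funM.
have X0 x : 0 <= S x `^ (p - 2) * Q x by apply: mulr_ge0 => //; exact: powR_ge0.
have Y0 x : 0 <= S x `^ (p - 2) * P x by apply: mulr_ge0 => //; exact: powR_ge0.
have ISXY : IS = (X + c%:E * Y)%E.
  rewrite /IS; under eq_integral => x _ do rewrite Sdec.
  exact: IaddZ.
have XS : (X <= IS)%E.
  apply: Ile => // x; rewrite Sdec lerDl; exact: mulr_ge0.
have YS : (Y <= IS)%E.
  apply: Ile => // x; rewrite Sdec; have := X0 x; have := Y0 x; nra.
have ISA : (IS <= (NR `^ (p - 1))%:E * IA)%E.
  rewrite -IZ //; last exact: powR_ge0.
  exact: (@Ile R d T mu (fun x => S x `^ p) (fun x => NR `^ (p - 1) * A x) (mSp p)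
      (measurable_funM (measurable_cst _) mA) (fun x => powR_ge0 _ _) SA).
have IBS : (IB <= IS)%E by apply: Ile.
have IA0 : (0 <= IA)%E by apply: Ige0.
have IAfin : IA \is a fin_num by rewrite ge0_fin_numE.
have ISfin : IS \is a fin_num.
  rewrite ge0_fin_numE; last by apply: Ige0 => x; exact: powR_ge0.
  apply: (le_lt_trans ISA); rewrite -(fineK IAfin) -EFinM; exact: ltry.
have IS0 : (0 <= IS)%E by apply: Ige0 => x; exact: powR_ge0.
have finle (U : \bar R) : (0 <= U)%E -> (U <= IS)%E -> U \is a fin_num.
  move=> U0 US; rewrite ge0_fin_numE //; apply: (le_lt_trans US).
  by rewrite -ge0_fin_numE.
have Xfin : X \is a fin_num by apply: finle => //; exact: Ige0.
have Yfin : Y \is a fin_num by apply: finle => //; exact: Ige0.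
have IBfin : IB \is a fin_num by apply: finle => //; exact: Ige0.
set s := fine IS; set xx := fine X; set yy := fine Y.
have ISE : IS = s%:E by rewrite fineK.
have IAE : IA = a%:E by rewrite fineK.
have IBE : IB = b%:E by rewrite fineK.
have XE : X = xx%:E by rewrite fineK.
have YE : Y = yy%:E by rewrite fineK.
have a0 : 0 < a by rewrite -lte_fin -IAE.
have b0 : 0 <= b by rewrite -lee_fin -IBE; exact: Ige0.
have s0 : 0 <= s by rewrite -lee_fin -ISE.
have xx0 : 0 <= xx by rewrite -lee_fin -XE; exact: Ige0.
have yy0 : 0 <= yy by rewrite -lee_fin -YE; exact: Ige0.
have sxy : s = xx + c * yy by apply/EFin_inj; rewrite -ISE ISXY XE YE.
have mSpp : measurable_fun setT (fun x => S x `^ p) := mSp p.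
have Sp0 x : 0 <= S x `^ p := powR_ge0 _ _.
rewrite ISE IAE -EFinM lee_fin; split => hp.
-
  have th01 := G1 hp.
  have e01 := G2 hp.
  have HX : (X <= IS `^ ((p - 2) / (p - 1)) * IA `^ (1 - (p - 2) / (p - 1)))%E.
    apply: le_trans; last exact: (@int_hoelder R d T mu _ _ _ th01 mSpp mA Sp0 A0).
    apply: Ile => //; first by apply: measurable_funM; apply: mpow.
    by move=> x; exact: (Fgt x hp).
  have HY : (Y <= IS `^ (1 - 2 / p) * IB `^ (2 / p))%E.
    have H := (@int_hoelder R d T mu _ _ _ e01 mSpp mB Sp0 B0).
    rewrite (_ : 1 - (1 - 2 / p) = 2 / p) in H; last by ring.
    apply: le_trans H; apply: Ile => //.
      by apply: measurable_funM; apply: mpow.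
    by move=> x; rewrite Gx.
  move: HX HY; rewrite XE YE ISE IAE IBE !poweR_EFin -!EFinM !lee_fin => HX HY.
  rewrite /w.
  apply: SL_gt => //.
  rewrite -cE {1}sxy; apply: lerD; [exact: HX|apply: ler_wpM2l; [exact: c0|exact: HY]].
-
  have a01 := L1 hp.
  have h01 := L2 hp.
  have HA : (IA <= IS `^ (2 - p) * X `^ (p - 1))%E.
    have H := (@int_hoelder R d T mu _ _ _ a01 mSpp mX Sp0 X0).
    rewrite (_ : 1 - (2 - p) = p - 1) in H; last by ring.
    apply: le_trans H; apply: Ile => //.
      by apply: measurable_funM; apply: mpow.
    by move=> x; exact: (Flt x hp).
  have HB : (IB <= IS `^ (1 - p / 2) * Y `^ (p / 2))%E.
    have H := (@int_hoelder R d T mu _ _ _ h01 mSpp mY Sp0 Y0).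
    rewrite (_ : 1 - (1 - p / 2) = p / 2) in H; last by ring.
    apply: le_trans H; apply: Ile => //.
      by apply: measurable_funM; apply: mpow.
    by move=> x; rewrite {1}Bx.
  move: HA HB; rewrite XE YE ISE IAE IBE !poweR_EFin -!EFinM !lee_fin => HA HB.
  have spos : 0 < s.
    rewrite lt_neqAle s0 andbT eq_sym; apply/negP => /eqP s00.
    move: HA; rewrite s00 powR0 ?mul0r ?(L3 hp) //.
    by rewrite leNgt a0.
  have H1 := @inv_step R s a xx (2 - p) (p - 1) spos (ltW a0) xx0 pm1 HA.
  have H2 := @inv_step R s b yy (1 - p / 2) (p / 2) spos b0 yy0 p2p HB.
  rewrite [X in a `^ X]E2 E1 in H1; rewrite E3 E4 in H2.
  rewrite /w; apply: SL_lt => //.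
  rewrite -cE [X in _ <= X]sxy; apply: lerD; [exact: H1|apply: ler_wpM2l; [exact: c0|exact: H2]].
Qed.

Theorem mainTheorem1 (R : realType) (d : measure_display) (T : measurableType d)
  (mu : {measure set T -> \bar R}) (N : nat) (f : 'I_N -> T -> R)
  (hN : (2 <= N)%N)
  (hmeas : forall j, measurable_fun setT (f j))
  (hnn : forall j x, 0 <= f j x)
  (p : R) (hp1 : 1 < p) (hp2 : p != 2)
  (hpos : (0 < sumpnorm mu f p)%E) (hfin : (sumpnorm mu f p < +oo)%E) :
  let Gam := Gammap mu f p in
  let C := (1 + (N%:R - 1) * Gam `^ rNp N p) `^ (p - 1) in
  (2 < p -> (pnormq mu (fun x => (\sum_(j < N) f j x)%R) p <= C%:E * sumpnorm mu f p)%E) /\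
  (p < 2 -> (C%:E * sumpnorm mu f p <= pnormq mu (fun x => (\sum_(j < N) f j x)%R) p)%E).
Proof.
move=> Gam C.
have p0 : 0 < p by lra.
set NR : R := N%:R.
have NR2 : 2 <= NR by rewrite /NR (ler_nat R 2 N).
pose S x := \sum_(j < N) f j x.
pose Q x := \sum_(j < N) f j x ^+ 2.
pose P x := pairavg f x.
pose A x := \sum_(j < N) `|f j x| `^ p.
pose B x := `|P x| `^ (p / 2).
pose c := NR * (NR - 1).
have c1 : 1 <= c by rewrite /c; nra.
have S0 x : 0 <= S x by apply: sumr_ge0.
have Q0 x : 0 <= Q x by apply: sumr_ge0 => j _; exact: sqr_ge0.
have Cpos : 0 < ('C(N, 2))%:R :> R by rewrite ltr0n bin_gt0.
have P0 x : 0 <= P x.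
  rewrite /P /pairavg; apply: mulr_ge0; first by rewrite invr_ge0 ltW.
  by do 2 (apply: sumr_ge0 => ? _); apply: mulr_ge0.
have Sq x : S x ^+ 2 = Q x + c * P x.
  rewrite /S sq_decomp -/(Q x) /P /pairavg; congr (_ + _).
  rewrite mulrA; congr (_ * _).
  have := bin2R R N; rewrite -/NR -/c => <-.
  by rewrite mulrC mulrA mulVf ?mul1r // gt_eqF.
have Aeq x : A x = \sum_(j < N) f j x `^ p.
  by apply: eq_bigr => j _; rewrite ger0_norm.
have Beq x : B x = P x `^ (p / 2) by rewrite /B ger0_norm.
have Sdec x : S x `^ p = S x `^ (p - 2) * Q x + c * (S x `^ (p - 2) * P x).
  by rewrite (@Sdecomp R (S x) (Q x) p) // Sq; ring.
have PS x : P x <= S x ^+ 2.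
  by rewrite Sq; have := P0 x; have := Q0 x; nra.
have BS x : B x <= S x `^ p by rewrite Beq; apply: Pbound.
have SA x : S x `^ p <= NR `^ (p - 1) * A x by rewrite Aeq; exact: pow_sum_bound.
have SP0 x : S x = 0 -> P x = 0.
  move=> E; have := Sq x; rewrite E expr0n /= => H.
  have := P0 x; have := Q0 x; nra.
have mS : measurable_fun setT S by apply: measurable_sum.
have mQ : measurable_fun setT Q by apply: measurable_sum => j; exact: measurable_funX.
have mP : measurable_fun setT P.
  rewrite /P /pairavg; apply: measurable_funM => //.
  apply: measurable_sum => i; apply: msum_cond => j; exact: measurable_funM.
have mA : measurable_fun setT A.
  apply: measurable_sum => j; apply: mpow; exact: measurableT_comp.
have mB : measurable_fun setT B by apply: mpow; exact: measurableT_comp.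
have mSp q : measurable_fun setT (fun x => S x `^ q) by exact: mpow.
set LS := pnormq mu _ p.
have IS_def : (LS = \int[mu]_x (S x `^ p)%:E)%E.
  by rewrite /LS /pnormq; apply: eq_integral => x _ /=; rewrite ger0_norm //; exact: (S0 x).
have IA_def : (sumpnorm mu f p = \int[mu]_x (A x)%:E)%E.
  rewrite /sumpnorm /pnormq -ge0_integral_sum //; first by apply: eq_integral => x _; rewrite /A sumEFin.
  by move=> j; apply/measurable_EFinP; apply: mpow; exact: measurableT_comp.
have IB_def : (pnormq mu (pairavg f) (p / 2) = \int[mu]_x (B x)%:E)%E by [].
rewrite IS_def IA_def.
have Fgt x : 2 < p -> S x `^ (p - 2) * Q x <= (S x `^ p) `^ ((p - 2) / (p - 1)) * A x `^ (1 - (p - 2) / (p - 1)).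
  by move=> hp; rewrite Aeq; apply: bound_gt2.
have Flt x : p < 2 -> A x <= (S x `^ p) `^ (2 - p) * (S x `^ (p - 2) * Q x) `^ (p - 1).
  by move=> hp; rewrite Aeq; apply: bound_lt2.
have Gx x : S x `^ (p - 2) * P x = (S x `^ p) `^ (1 - 2 / p) * B x `^ (2 / p).
  by rewrite Beq -Gid.
have Bx x : B x = (S x `^ p) `^ (1 - p / 2) * (S x `^ (p - 2) * P x) `^ (p / 2).
  by rewrite Beq; apply: (@Bid R (S x) (P x) p (S0 x) (P0 x) (@SP0 x) p0).
have A0 x : 0 <= A x by apply: sumr_ge0 => j _; exact: powR_ge0.
have B0 x : 0 <= B x by exact: powR_ge0.
have GamE : Gam = fine (\int[mu]_x (B x)%:E)%E / (NR^-1 * fine (\int[mu]_x (A x)%:E)%E).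
  by rewrite /Gam /Gammap IB_def IA_def.
have hA0 : (0 < \int[mu]_x (A x)%:E)%E by rewrite -IA_def.
have hA1 : (\int[mu]_x (A x)%:E < +oo)%E by rewrite -IA_def.
have H := @core R d T mu S Q P A B NR c p hp1 hp2 NR2 erefl mS mQ mP mA mB S0 Q0 P0 A0 B0
  Sdec Fgt Flt Gx Bx SA BS hA0 hA1.
cbv zeta in H.
have a0 : 0 < fine (\int[mu]_x (A x)%:E)%E.
  by apply: fine_gt0; rewrite hA0 hA1.
have wE : (1 + (NR - 1) * (NR * fine (\int[mu]_x (B x)%:E)%E / fine (\int[mu]_x (A x)%:E)%E) `^ rr _ NR p) `^ (p - 1) = C.
  rewrite /C; have -> : NR * fine (\int[mu]_x (B x)%:E)%E / fine (\int[mu]_x (A x)%:E)%E = Gam.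
    rewrite GamE; field; apply/andP; split; apply/eqP; lra.
  by [].
by rewrite -wE.
Qed.
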